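(* Let $t\in[0,1]$, $\ell\in\{1,\dots,L\}$, and $\mathbf x_t\in\mathsf X$ with $p_t(\mathbf x_t)>0$. Then for every $\mathbf y\in\mathsf X$ with $\mathbf y^{-\ell}=\mathbf x_t^{-\ell}$, $$\frac{p_t(\mathbf y)}{p_t(\mathbf x_t)}=\frac{q^\ell_{t|0}\big(\mathbf y^\ell\mid\hat{\mathbf x}^{\mathrm{loo}}_0(\mathbf x_t,t)^\ell\big)}{q^\ell_{t|0}\big(\mathbf x_t^\ell\mid\hat{\mathbf x}^{\mathrm{loo}}_0(\mathbf x_t,t)^\ell\big)}.$$
   Context: **Setup.** - Let $K\ge2$, $L\ge1$ and $\mathsf V=\{1,\dots,K\}$. Tokens are identified with the standard basis vectors of $\mathbb R^K$. - $\Delta_K$ is the probability simplex. - $\mathsf X=\mathsf V^L$. For $\mathbf x\in\mathsf X$, $\mathbf x^\ell$ is its $\ell$-th token and $\mathbf x^{-\ell}$ denotes the other tokens. - $p_0$ is a distribution on $\mathsf X$. - The noise schedule $\alpha:[0,1]\to[0,1]$ is nonincreasing with $\alpha_0=1$. - For each $\ell$ fix $\pi^\ell\in\Delta_K$. The forward token kernel is $q^\ell_{t|0}(x\mid\nu)=\langle x,\alpha_t\nu+(1-\alpha_t)\pi^\ell\rangle$, defined for $\nu\in\Delta_K$ (in particular for one-hot $\nu$). - The sequence-level kernel is the product over positions. - $X_0\sim p_0$ and $X_t\mid X_0\sim q_{t|0}(\cdot\mid X_0)$. $p_t$ is the law of $X_t$. **Leave-one-out mean.** - $\hat{\mathbf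 x}^{\mathrm{loo}}_0(\mathbf x_t,t)^\ell:=\mathbb E[X_0^\ell\mid X_t^{-\ell}=\mathbf x_t^{-\ell}]\in\Delta_K$. *)

(* Defs.v *)
From mathcomp Require Import all_boot all_order all_algebra.
Set Implicit Arguments. Unset Strict Implicit. Unset Printing Implicit Defensive.
Import Order.TTheory GRing.Theory Num.Theory.
Local Open Scope ring_scope.

(* Tokens: 'I_K ; sequences X = V^L : {ffun 'I_L -> 'I_K}.
   A vector of R^K is a function 'I_K -> R; <x, v> = v x. *)
Definition seqX (K L : nat) := {ffun 'I_L -> 'I_K}.

Definition onehot {R : numDomainType} {K : nat} (x : 'I_K) : 'I_K -> R :=
  fun k => (k == x)%:R.

Definition in_simplex {R : numDomainType} {K : nat} (v : 'I_K -> R) : Prop :=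
  (forall k, 0 <= v k) /\ \sum_(k < K) v k = 1.

(* q^l_{t|0}(x | nu) = < x , alpha_t nu + (1 - alpha_t) pi^l > *)
Definition qtok {R : numDomainType} {K : nat} (alpha : R -> R) (t : R)
  (pil : 'I_K -> R) (x : 'I_K) (nu : 'I_K -> R) : R :=
  alpha t * nu x + (1 - alpha t) * pil x.

Definition qseq {R : numDomainType} {K L : nat} (alpha : R -> R) (t : R)
  (pi : 'I_L -> 'I_K -> R) (x x0 : seqX K L) : R :=
  \prod_(l < L) qtok alpha t (pi l) (x l) (onehot (x0 l)).

Definition joint {R : numDomainType} {K L : nat} (p0 : seqX K L -> R)
  (alpha : R -> R) (t : R) (pi : 'I_L -> 'I_K -> R) (x0 x : seqX K L) : R :=
  p0 x0 * qseq alpha t pi x x0.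

Definition pt {R : numDomainType} {K L : nat} (p0 : seqX K L -> R)
  (alpha : R -> R) (t : R) (pi : 'I_L -> 'I_K -> R) (x : seqX K L) : R :=
  \sum_(x0 : seqX K L) joint p0 alpha t pi x0 x.

Definition agree_off {K L : nat} (l : 'I_L) (y x : seqX K L) : bool :=
  [forall m : 'I_L, (m != l) ==> (y m == x m)].

Definition loo_num {R : numDomainType} {K L : nat} (p0 : seqX K L -> R)
  (alpha : R -> R) (t : R) (pi : 'I_L -> 'I_K -> R) (x : seqX K L)
  (l : 'I_L) (k : 'I_K) : R :=
  \sum_(x0 : seqX K L | x0 l == k)
    \sum_(y : seqX K L | agree_off l y x) joint p0 alpha t pi x0 y.

Definition loo_den {R : numDomainType} {K L : nat} (p0 : seqX K L -> R)
  (alpha : R -> R) (t : R) (pi : 'I_L -> 'I_K -> R) (x : seqX K L)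
  (l : 'I_L) : R :=
  \sum_(x0 : seqX K L)
    \sum_(y : seqX K L | agree_off l y x) joint p0 alpha t pi x0 y.

(* leave-one-out mean  E[X_0^l | X_t^{-l} = x^{-l}] in Delta_K
   (as the vector of conditional probabilities of each token) *)
Definition xloo {R : numFieldType} {K L : nat} (p0 : seqX K L -> R)
  (alpha : R -> R) (t : R) (pi : 'I_L -> 'I_K -> R) (x : seqX K L)
  (l : 'I_L) : 'I_K -> R :=
  fun k => loo_num p0 alpha t pi x l k / loo_den p0 alpha t pi x l.

(* Main.v *)
Require Import Defs.
From mathcomp Require Import all_boot all_order all_algebra.
From mathcomp Require Import ring.
Import Order.TTheory GRing.Theory Num.Theory.
Local Open Scope ring_scope.

Definition cw {R : numDomainType} {K L : nat} (p0 : seqX K L -> R)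
  (alpha : R -> R) (t : R) (pi : 'I_L -> 'I_K -> R) (xt : seqX K L) (l : 'I_L)
  (x0 : seqX K L) : R :=
  p0 x0 * \prod_(m < L | m != l) qtok alpha t (pi m) (xt m) (onehot (x0 m)).

Lemma joint_split {R : numDomainType} {K L : nat} (p0 : seqX K L -> R)
  (alpha : R -> R) (t : R) (pi : 'I_L -> 'I_K -> R) (xt : seqX K L) (l : 'I_L)
  (x0 y : seqX K L) : (forall m, m != l -> y m = xt m) ->
  joint p0 alpha t pi x0 y =
  cw p0 alpha t pi xt l x0 * qtok alpha t (pi l) (y l) (onehot (x0 l)).
Proof.
move=> hy; rewrite /joint /qseq /cw (bigD1 l) //=.
rewrite (eq_bigr (fun m => qtok alpha t (pi m) (xt m) (onehot (x0 m)))); last first.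
  by move=> m hm; rewrite hy.
by rewrite mulrCA mulrA [X in _ = X]mulrC mulrA.
Qed.

Lemma agree_P {K L : nat} (l : 'I_L) (y x : seqX K L) :
  agree_off l y x -> forall m, m != l -> y m = x m.
Proof. by move=> /forallP h m hm; move: (h m); rewrite hm => /eqP. Qed.

Definition upd {K L : nat} (l : 'I_L) (x : seqX K L) (j : 'I_K) : seqX K L :=
  [ffun m => if m == l then j else x m].

Lemma sum_agree {R : numDomainType} {K L : nat} (l : 'I_L) (x : seqX K L)
  (F : seqX K L -> R) :
  \sum_(y : seqX K L | agree_off l y x) F y = \sum_(j < K) F (upd l x j).
Proof.
rewrite (reindex_onto (upd l x) (fun y : seqX K L => y l)).
  apply: eq_bigl => j; rewrite /upd ffunE eqxx eqxx andbT.
  by apply/forallP => m; apply/implyP => hm; rewrite ffunE (negbTE hm).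
move=> y hy; apply/ffunP => m; rewrite ffunE.
by case: eqP => [->|/eqP hm] //; rewrite (@agree_P K L l y x hy m hm).
Qed.

Theorem mainTheorem3 (R : realFieldType) (K L : nat)
  (hK : (2 <= K)%N) (hL : (1 <= L)%N)
  (p0 : seqX K L -> R)
  (hp0_nonneg : forall x, 0 <= p0 x)
  (hp0_sum : \sum_(x : seqX K L) p0 x = 1)
  (alpha : R -> R)
  (halpha_range : forall s, 0 <= s <= 1 -> 0 <= alpha s <= 1)
  (halpha_mono : forall s u, 0 <= s -> s <= u -> u <= 1 -> alpha u <= alpha s)
  (halpha0 : alpha 0 = 1)
  (pi : 'I_L -> 'I_K -> R)
  (hpi : forall l, in_simplex (pi l))
  (t : R) (ht : 0 <= t <= 1)
  (l : 'I_L) (xt : seqX K L)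
  (hpos : 0 < pt p0 alpha t pi xt)
  (y : seqX K L) (hy : forall m : 'I_L, m != l -> y m = xt m) :
  pt p0 alpha t pi y / pt p0 alpha t pi xt =
  qtok alpha t (pi l) (y l) (xloo p0 alpha t pi xt l)
  / qtok alpha t (pi l) (xt l) (xloo p0 alpha t pi xt l).
Proof.
set c := cw p0 alpha t pi xt l.
set w := fun k => \sum_(x0 : seqX K L | x0 l == k) c x0.
set W := \sum_(x0 : seqX K L) c x0.
set A := alpha t.
have [hA0 hA1] : 0 <= A /\ A <= 1 by move/andP: (halpha_range t ht).
have qge0 : forall m x k, 0 <= qtok alpha t (pi m) x (onehot k).
  move=> m x k; rewrite /qtok; apply: addr_ge0; apply: mulr_ge0 => //.
  - by rewrite subr_ge0.
  - by case: (hpi m).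
have cge0 : forall x0, 0 <= c x0.
  by move=> x0; rewrite /c /cw mulr_ge0 // prodr_ge0.
have ptz : forall z : seqX K L, (forall m, m != l -> z m = xt m) ->
    pt p0 alpha t pi z = A * w (z l) + (1 - A) * pi l (z l) * W.
  move=> z hz; rewrite /pt (eq_bigr (fun x0 => c x0 * qtok alpha t (pi l) (z l) (onehot (x0 l)))); last first.
    by move=> x0 _; rewrite (@joint_split _ _ _ _ _ _ _ xt l _ _ hz).
  rewrite /qtok /onehot.
  under eq_bigr => x0 _ do rewrite mulrDr.
  rewrite big_split /=; congr (_ + _).
    rewrite /w mulr_sumr [RHS]big_mkcond /=; apply: eq_bigr => x0 _.
    by rewrite eq_sym; case: (x0 l == z l); rewrite ?mulr1 ?mulr0 // mulrC.
  by rewrite /W mulr_sumr; apply: eq_bigr => x0 _; rewrite mulrC.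
have hW : W != 0.
  apply/eqP => W0.
  have c0 : forall x0, c x0 = 0.
    by move=> x0; move/psumr_eq0P: W0 => h; apply: h.
  move: hpos; rewrite /pt big1 ?ltxx // => x0 _.
  by rewrite (@joint_split _ _ _ _ _ _ _ xt l _ _ (fun m _ => erefl)) -/c c0 mul0r.
have hnum : forall k, loo_num p0 alpha t pi xt l k = w k.
  move=> k; rewrite /loo_num /w; apply: eq_bigr => x0 _.
  rewrite (eq_bigr (fun z : seqX K L => c x0 * qtok alpha t (pi l) (z l) (onehot (x0 l)))); last first.
    by move=> z hz; rewrite (@joint_split _ _ _ _ _ _ _ xt l _ _ (@agree_P K L l z xt hz)).
  rewrite -mulr_sumr sum_agree.
  rewrite (eq_bigr (fun j => qtok alpha t (pi l) j (onehot (x0 l)))); last first.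
    by move=> j _; rewrite /upd ffunE eqxx.
  rewrite /qtok big_split /= -!mulr_sumr.
  case: (hpi l) => _ ->; rewrite /onehot (bigD1 (x0 l)) //= eqxx big1 ?addr0.
    by rewrite mulr1 mulr1 addrC subrK mulr1.
  by move=> j /negbTE ->.
have hden : loo_den p0 alpha t pi xt l = W.
  rewrite /loo_den /W; apply: eq_bigr => x0 _.
  rewrite (eq_bigr (fun z : seqX K L => c x0 * qtok alpha t (pi l) (z l) (onehot (x0 l)))); last first.
    by move=> z hz; rewrite (@joint_split _ _ _ _ _ _ _ xt l _ _ (@agree_P K L l z xt hz)).
  rewrite -mulr_sumr sum_agree.
  rewrite (eq_bigr (fun j => qtok alpha t (pi l) j (onehot (x0 l)))); last first.
    by move=> j _; rewrite /upd ffunE eqxx.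
  rewrite /qtok big_split /= -!mulr_sumr.
  case: (hpi l) => _ ->; rewrite /onehot (bigD1 (x0 l)) //= eqxx big1 ?addr0.
    by rewrite mulr1 mulr1 addrC subrK mulr1.
  by move=> j /negbTE ->.
have hq : forall z : seqX K L, (forall m, m != l -> z m = xt m) ->
    pt p0 alpha t pi z = W * qtok alpha t (pi l) (z l) (xloo p0 alpha t pi xt l).
  move=> z hz; rewrite ptz // /qtok /xloo hnum hden -/A; by field.
rewrite (hq y hy) (hq xt (fun m _ => erefl)) -mulf_div divff // mul1r //.
Qed.
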